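(* Let $\mathbb F$ be a finitely generated free group with symmetric free generating set $S$, let $\mathcal G=(V,E)$ be a constraint graph with $V$ and $E$ finite, and let $X=X_{\mathcal G}\subset V^{\mathbb F}$ be the graph subshift determined by $\mathcal G$. If there exists a shift-invariant Borel probability measure $\mu$ on $X$, then there exists a periodic treequence $x\in X$. Moreover, if for some $v\in V$ one has $\mu(\{x\in X: x(\mathrm{id})=v\})>0$, then there exists a periodic treequence $x\in X$ with $x(\mathrm{id})=v$.
   Context: $S=B\cup B^{-1}$ for a free basis $B$ of $\mathbb F$; $\mathrm{id}$ is the identity of $\mathbb F$. A constraint graph is a pair $\mathcal G=(V,E)$ with $E\subset V\times V\times S$; a triple $(v,w;s)\in E$ is a directed edge from $v$ to $w$ labeled $s$. Elements of $V^{\mathbb F}$ (functions $\mathbb F\to V$) are called treequences; $V^{\mathbb F}$ carries the product topology ($V$ discrete). The graph subshift $X_{\mathcal G}$ is the set of $x\in V^{\mathbb F}$ such that $(x(f),x(fs);s)\in E$ for all $f\in\mathbb F$, $s\in S$. $\mathbb F$ acts by shifts $(\sigma_gx)(f)=x(g^{-1}f)$; a measure $\mu$ is shift-invariant if $\mu(\sigma_gA)=\mu(A)$ for all $g$ and Borel $A$. A treequence $x$ is periodic if $\{f\in\mathbb F:\sigma_fx=x\}$ has finite index in $\mathbb F$. *)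

(* Defs.v *)
From mathcomp Require Import all_boot.
From Stdlib Require Import Reals.

Set Implicit Arguments.
Unset Strict Implicit.
Unset Printing Implicit Defensive.

(* A letter (i, b) stands for the basis element b_i if b = false
   and for its inverse b_i^{-1} if b = true.  Letters form S = B ∪ B^{-1}. *)
Definition letter (n : nat) := ('I_n * bool)%type.

Definition inv_letter n (l : letter n) : letter n := (l.1, ~~ l.2).

Definition reduced n (w : seq (letter n)) : bool :=
  sorted (fun a b => b != inv_letter a) w.

Definition push n (l : letter n) (w : seq (letter n)) : seq (letter n) :=
  match w with
  | [::] => [:: l]
  | l' :: w' => if l' == inv_letter l then w' else l :: w
  end.

Definition reduce n (s : seq (letter n)) : seq (letter n) := foldr (@push n) [::] s.

Lemma push_reduced n (l : letter n) w : reduced w -> reduced (push l w).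
Proof.
case: w => [|l' w] //= H.
case: ifP => Hl; first exact: path_sorted H.
by rewrite /reduced /= Hl H.
Qed.

Lemma reduced_reduce n (s : seq (letter n)) : reduced (reduce s).
Proof. by elim: s => [|l s IH] //=; apply: push_reduced. Qed.

Definition FG (n : nat) := {w : seq (letter n) | reduced w}.

Definition fg_mul n (u v : FG n) : FG n :=
  exist _ (reduce (proj1_sig u ++ proj1_sig v)) (reduced_reduce _).

Definition fg_inv n (u : FG n) : FG n :=
  exist _ (reduce (rev (map (@inv_letter n) (proj1_sig u)))) (reduced_reduce _).

Definition fg_id n : FG n := exist _ [::] (erefl true).

Definition fg_gen n (s : letter n) : FG n := exist _ [:: s] (erefl true).

Definition constraint_graph (V : finType) (n : nat) := V -> V -> letter n -> bool.

Definition treequence (V : Type) (n : nat) := FG n -> V.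

Definition in_subshift (V : finType) n (E : constraint_graph V n)
  (x : treequence V n) : Prop :=
  forall (f : FG n) (s : letter n), E (x f) (x (fg_mul f (fg_gen s))) s.

Definition shift V n (g : FG n) (x : treequence V n) : treequence V n :=
  fun f => x (fg_mul (fg_inv g) f).

(* periodic: the stabilizer {f | σ_f x = x} has finite index, i.e. finitely
   many left cosets r·Stab cover F *)
Definition stabilizes V n (x : treequence V n) (f : FG n) : Prop :=
  forall h, shift f x h = x h.

Definition periodic V n (x : treequence V n) : Prop :=
  exists reps : seq (FG n),
    forall f : FG n, exists2 r, List.In r reps & stabilizes x (fg_mul (fg_inv r) f).

(* open sets of V^F with the product topology (V discrete): membership in U
   is witnessed by agreement on a finite set of coordinates *)
Definition open_set V n (U : treequence V n -> Prop) : Prop :=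
  forall x, U x -> exists K : seq (FG n),
    forall y, (forall f, List.In f K -> y f = x f) -> U y.

Definition sigma_algebra (T : Type) (M : (T -> Prop) -> Prop) : Prop :=
  [/\ M (fun _ => True),
      (forall A, M A -> M (fun t => ~ A t)) &
      (forall A : nat -> T -> Prop, (forall k, M (A k)) -> M (fun t => exists k, A k t))].

Definition borel V n (A : treequence V n -> Prop) : Prop :=
  forall M, sigma_algebra M -> (forall U, open_set U -> M U) -> M A.

(* Borel probability measure on V^F (values outside Borel sets are irrelevant) *)
Definition borel_prob_measure V n (mu : (treequence V n -> Prop) -> R) : Prop :=
  [/\ (forall A, borel A -> (0 <= mu A)%R),
      mu (fun _ => True) = 1%R &
      (forall A : nat -> treequence V n -> Prop,
          (forall k, borel (A k)) ->
          (forall i j x, i <> j -> A i x -> A j x -> False) ->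
          infinite_sum (fun k => mu (A k)) (mu (fun x => exists k, A k x)))].

(* shift invariance: mu(σ_g A) = mu(A) for all g and Borel A.
   Here σ_g A = {σ_g y | y ∈ A} = {z | A (σ_{g^{-1}} z)}. *)
Definition shift_invariant V n (mu : (treequence V n -> Prop) -> R) : Prop :=
  forall (g : FG n) (A : treequence V n -> Prop),
    borel A -> mu (fun z => A (shift (fg_inv g) z)) = mu A.

(* Main.v *)
From Pilot Require Import Defs.
From mathcomp Require Import all_boot.
From Stdlib Require Import Reals.
From HB Require Import structures.
From Stdlib Require Import Lra Lia ZArith.
From Stdlib Require Import Classical ClassicalEpsilon FunctionalExtensionality PropExtensionality.
Import Pilot.Defs.
Set Implicit Arguments.
Unset Strict Implicit.
Unset Printing Implicit Defensive.

Lemma Rplus_assoc' : associative Rplus.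
Proof. move=> x y z; by rewrite Rplus_assoc. Qed.
HB.instance Definition _ := Monoid.isComLaw.Build R 0%R Rplus Rplus_assoc' Rplus_comm Rplus_0_l.
Lemma Zplus_assoc' : associative Z.add.
Proof. move=> x y z; lia. Qed.
HB.instance Definition _ := Monoid.isComLaw.Build Z 0%Z Z.add Zplus_assoc' Z.add_comm Z.add_0_l.

Notation "\rsum_ ( i : J ) F" := (\big[Rplus/0%R]_(i : J) F) (at level 41, i, J at level 50).

Section Elim.
Variable J : finType.

Definition dotZ (c z : J -> Z) : Z := \big[Z.add/0%Z]_(j : J) (c j * z j)%Z.
Definition dotR (c : J -> Z) (y : J -> R) : R := \big[Rplus/0%R]_(j : J) (IZR (c j) * y j)%R.

Lemma sumZ_scal (k : Z) (F : J -> Z) :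
  \big[Z.add/0%Z]_(j : J) (k * F j)%Z = (k * \big[Z.add/0%Z]_(j : J) F j)%Z.
Proof.
apply: (big_ind2 (fun a b => a = k * b)%Z); first lia.
- move=> a b a' b' -> ->; lia.
- by [].
Qed.

Lemma sumR_scal (k : R) (F : J -> R) :
  \big[Rplus/0%R]_(j : J) (k * F j)%R = (k * \big[Rplus/0%R]_(j : J) F j)%R.
Proof.
apply: (big_ind2 (fun a b => a = k * b)%R); first ring.
- move=> a b a' b' -> ->; ring.
- by [].
Qed.

Lemma dotZ_lin (a b : Z) (c e z : J -> Z) :
  dotZ (fun j => a * c j + b * e j)%Z z = (a * dotZ c z + b * dotZ e z)%Z.
Proof.
rewrite /dotZ -!sumZ_scal -big_split /=; apply: eq_bigr => j _; lia.
Qed.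

Lemma dotR_lin (a b : Z) (c e : J -> Z) y :
  dotR (fun j => a * c j + b * e j)%Z y = (IZR a * dotR c y + IZR b * dotR e y)%R.
Proof.
rewrite /dotR -!sumR_scal -big_split /=; apply: eq_bigr => j _.
rewrite plus_IZR !mult_IZR; ring.
Qed.

Lemma dotZ_scalr (a : Z) (c z : J -> Z) :
  dotZ c (fun j => a * z j)%Z = (a * dotZ c z)%Z.
Proof. rewrite /dotZ -sumZ_scal; apply: eq_bigr => j _; lia. Qed.

Lemma dotZ_upd (c z : J -> Z) j1 t :
  dotZ c (fun j => z j + (if j == j1 then t else 0))%Z = (dotZ c z + c j1 * t)%Z.
Proof.
rewrite /dotZ (bigD1 j1) //= [in RHS](bigD1 j1) //= eqxx.
have -> : \big[Z.add/0%Z]_(i | i != j1) (c i * (z i + (if i == j1 then t else 0)))%Z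
        = \big[Z.add/0%Z]_(i | i != j1) (c i * z i)%Z.
  by apply: eq_bigr => i /negbTE ->; lia.
lia.
Qed.

Lemma dotZ_zero (c z : J -> Z) : (forall j, c j = 0%Z) -> dotZ c z = 0%Z.
Proof. move=> H; rewrite /dotZ big1 // => j _; rewrite H; lia. Qed.

Lemma IZR_sum (F : J -> Z) :
  IZR (\big[Z.add/0%Z]_(j : J) F j) = \big[Rplus/0%R]_(j : J) IZR (F j).
Proof. apply: (big_morph IZR); [exact: plus_IZR | by []]. Qed.

Lemma sumR_le (F G : J -> R) : (forall j, F j <= G j)%R ->
  (\big[Rplus/0%R]_(j : J) F j <= \big[Rplus/0%R]_(j : J) G j)%R.
Proof.
move=> H; apply: (big_ind2 (fun a b => a <= b)%R); first lra.
- move=> a b a' b' ? ?; lra.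
- by move=> j _; apply: H.
Qed.

Lemma fold_nonneg (A : Type) (t : A -> R) (l : list A) :
  (forall d, List.In d l -> (0 <= t d)%R) ->
  (0 <= List.fold_right (fun d acc => t d + acc)%R 0%R l)%R.
Proof.
elim: l => [|d0 l IH] tp /=; first lra.
have := tp d0 (or_introl erefl).
have := IH (fun d h => tp d (or_intror h)); lra.
Qed.

Lemma fold_ge (A : Type) (t : A -> R) (l : list A) :
  (forall d, List.In d l -> (0 <= t d)%R) ->
  forall d, List.In d l -> (t d <= List.fold_right (fun d acc => t d + acc)%R 0%R l)%R.
Proof.
elim: l => [|d0 l IH] tp d //= [Heq|Hin].
- subst d; have := fold_nonneg (fun d h => tp d (or_intror h)); lra.
- have := IH (fun d h => tp d (or_intror h)) d Hin.
  have := tp d0 (or_introl erefl); lra.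
Qed.

Lemma approx (ineqs : list (J -> Z)) (y : J -> R) :
  (forall d, List.In d ineqs -> (dotR d y > 0)%R) ->
  exists z, forall d, List.In d ineqs -> (dotZ d z > 0)%Z.
Proof.
move=> Hd.
pose S (d : J -> Z) := \big[Z.add/0%Z]_(j : J) Z.abs (d j).
pose term (d : J -> Z) := ((IZR (S d) + 1) / dotR d y)%R.
pose K := List.fold_right (fun d acc => term d + acc)%R 0%R ineqs.
have termpos : forall d, List.In d ineqs -> (0 <= term d)%R.
  move=> d Hin; rewrite /term; apply: Rle_mult_inv_pos; last exact: Hd.
  have : (0 <= IZR (S d))%R.
    apply: IZR_le; rewrite /S; apply: (big_ind (fun a => 0 <= a)%Z) => //; lia.
  lra.
have Kge : forall d, List.In d ineqs -> (term d <= K)%R.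
  by move=> d; apply: fold_ge.
exists (fun j => up (K * y j)).
move=> d Hin; apply: Z.lt_gt; apply: lt_IZR.
rewrite /dotZ IZR_sum.
have Hyp := Hd d Hin.
have H1 : (K * dotR d y >= IZR (S d) + 1)%R.
  have := Kge d Hin; rewrite /term => Ht.
  have : ((IZR (S d) + 1) / dotR d y * dotR d y <= K * dotR d y)%R.
    apply: Rmult_le_compat_r; lra.
  move=> H; rewrite /Rdiv Rmult_assoc Rinv_l in H; lra.
have H2 : (\big[Rplus/0%R]_(j : J) IZR (d j * up (K * y j))
          >= K * dotR d y - IZR (S d))%R.
  rewrite /dotR /S IZR_sum -sumR_scal.
  have -> : (\big[Rplus/0%R]_(j : J) (K * (IZR (d j) * y j)) -
             \big[Rplus/0%R]_(j : J) IZR (Z.abs (d j)))%R =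
            \big[Rplus/0%R]_(j : J) (K * (IZR (d j) * y j) - IZR (Z.abs (d j)))%R.
    apply: (big_ind3 (fun a b c => a - b = c)%R); first ring.
    - by move=> a b c a' b' c' <- <-; ring.
    - by [].
  apply/Rle_ge/sumR_le => j.
  rewrite mult_IZR.
  have [hu1 hu2] := archimed (K * y j).
  set u := IZR (up (K * y j)) in hu1 hu2 *.
  case: (Z_le_gt_dec 0 (d j)) => hdj.
  - rewrite Z.abs_eq //.
    have : (0 <= IZR (d j))%R by apply: IZR_le.
    nra.
  - rewrite Z.abs_neq; last lia.
    rewrite opp_IZR.
    have : (IZR (d j) < 0)%R by apply: IZR_lt; lia.
    nra.
rewrite /=; lra.
Qed.

Lemma elimZ_aux m : forall (eqs ineqs : list (J -> Z)) (y : J -> R), size eqs = m ->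
  (forall e, List.In e eqs -> dotR e y = 0%R) ->
  (forall d, List.In d ineqs -> (dotR d y > 0)%R) ->
  exists z, (forall e, List.In e eqs -> dotZ e z = 0%Z) /\
            (forall d, List.In d ineqs -> (dotZ d z > 0)%Z).
Proof.
elim: m => [|m IH] [|e eqs] ineqs y // Hsz He Hd.
  have [z Hz] := approx Hd; by exists z.
case: Hsz => Hsz.
case: (pickP (fun j => ~~ Z.eqb (e j) 0)) => [j1 Hj1 | Hnone].
- set a := e j1.
  have a0 : a <> 0%Z by move: Hj1; rewrite -/a; case: a.
  pose T (c : J -> Z) := fun j => (Z.abs a * c j + (- (Z.sgn a * c j1)) * e j)%Z.
  have HeT : forall c, dotR (T c) y = (IZR (Z.abs a) * dotR c y)%R.
    move=> c; rewrite /T dotR_lin (He e (or_introl erefl)); ring.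
  have pa : (0 < IZR (Z.abs a))%R by apply: IZR_lt; lia.
  have [z' [Hz1 Hz2]] : exists z, (forall e, List.In e (List.map T eqs) -> dotZ e z = 0%Z) /\
            (forall d, List.In d (List.map T ineqs) -> (dotZ d z > 0)%Z).
    apply: (IH _ _ y); first by rewrite -Hsz; elim: (eqs) => //= ? ? ->.
    + move=> c /List.in_map_iff [c0 [<- Hc0]]; rewrite HeT He /=; [ring | by right].
    + move=> c /List.in_map_iff [c0 [<- Hc0]]; rewrite HeT.
      have := Hd c0 Hc0; nra.
  pose De := dotZ e z'.
  pose z := fun j => (Z.abs a * z' j + (if j == j1 then - Z.sgn a * De else 0))%Z.
  have key : forall c, dotZ c z = dotZ (T c) z'.
    move=> c; rewrite /z dotZ_upd dotZ_scalr /T dotZ_lin /De; ring.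
  exists z; split.
  + move=> c [<-|Hc].
    * rewrite key /T dotZ_lin -/De /a.
      have -> : (Z.abs (e j1) * De + - (Z.sgn (e j1) * e j1) * De = 0)%Z; last by [].
      have -> : (Z.sgn (e j1) * e j1 = Z.abs (e j1))%Z by lia.
      ring.
    * rewrite key; apply: Hz1; exact: List.in_map.
  + move=> c Hc; rewrite key; apply: Hz2; exact: List.in_map.
- have [z [Hz1 Hz2]] := IH eqs ineqs y Hsz (fun c h => He c (or_intror h)) Hd.
  exists z; split => // c [<-|Hc]; last exact: Hz1.
  apply: dotZ_zero => j; have := Hnone j; rewrite /= => /negbFE /Z.eqb_eq //.
Qed.

Lemma elimZ (eqs ineqs : list (J -> Z)) (y : J -> R) :
  (forall e, List.In e eqs -> dotR e y = 0%R) ->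
  (forall d, List.In d ineqs -> (dotR d y > 0)%R) ->
  exists z, (forall e, List.In e eqs -> dotZ e z = 0%Z) /\
            (forall d, List.In d ineqs -> (dotZ d z > 0)%Z).
Proof. exact: (@elimZ_aux (size eqs) eqs ineqs y erefl). Qed.
End Elim.

Section Action.
Variables (n : nat) (O : finType) (sg : 'I_n -> O -> O).
Hypothesis sig_inj : forall i, injective (sg i).

Definition act_letter (w : O) (l : letter n) : O :=
  if l.2 then invF (@sig_inj l.1) w else sg l.1 w.

Definition act_word (w : O) (s : seq (letter n)) : O := foldl act_letter w s.

Lemma act_letterK w l : act_letter (act_letter w l) (inv_letter l) = w.
Proof.
case: l => i [] /=; rewrite /act_letter /=; [exact: f_invF | exact: invF_f].
Qed.

Lemma inv_letterK (l : letter n) : inv_letter (inv_letter l) = l.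
Proof. by case: l => i b; rewrite /inv_letter /= negbK. Qed.

Lemma act_push w l s : act_word w (push l s) = act_word w (l :: s).
Proof.
case: s => [|l' s] //=. case: ifP => // /eqP ->.
by rewrite /act_word /= act_letterK.
Qed.

Lemma act_reduce w s : act_word w (reduce s) = act_word w s.
Proof.
elim: s w => [|l s IH] w //=.
by rewrite act_push /act_word /= -/(act_word _ (reduce s)) IH.
Qed.

Lemma act_cat w s t : act_word w (s ++ t) = act_word (act_word w s) t.
Proof. by rewrite /act_word foldl_cat. Qed.

Lemma act_invK w s : act_word (act_word w s) (rev (map (@inv_letter n) s)) = w.
Proof.
elim: s w => [|l s IH] w //=.
by rewrite rev_cons -cats1 act_cat IH /act_word /= act_letterK.
Qed.

Lemma act_Kinv w s : act_word (act_word w (rev (map (@inv_letter n) s))) s = w.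
Proof.
have := act_invK w (rev (map (@inv_letter n) s)).
rewrite map_rev revK -map_comp.
have -> : map (@inv_letter n \o @inv_letter n) s = s.
  by elim: s => [|l s IH] //=; rewrite IH /= inv_letterK.
by [].
Qed.

Definition aw (w : O) (f : FG n) : O := act_word w (proj1_sig f).

Lemma aw_mul w f g : aw w (fg_mul f g) = aw (aw w f) g.
Proof. by rewrite /aw /fg_mul /= act_reduce act_cat. Qed.

Lemma aw_inv w f : aw w (fg_inv f) = act_word w (rev (map (@inv_letter n) (proj1_sig f))).
Proof. by rewrite /aw /fg_inv /= act_reduce. Qed.

Lemma aw_invK w f : aw (aw w f) (fg_inv f) = w.
Proof. by rewrite aw_inv act_invK. Qed.

Lemma aw_Kinv w f : aw (aw w (fg_inv f)) f = w.
Proof. by rewrite aw_inv /aw act_Kinv. Qed.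

Lemma aw_gen w s : aw w (fg_gen s) = act_letter w s.
Proof. by []. Qed.

Lemma aw_id w : aw w (fg_id n) = w.
Proof. by []. Qed.

End Action.

Lemma build_sigma (V : eqType) (v0 : V) (sO : seq V) (sT : seq (V*V)) :
  perm_eq sO (map fst sT) -> perm_eq (map snd sT) sO ->
  exists sg : 'I_(size sO) -> 'I_(size sO),
    injective sg /\ forall k : 'I_(size sO), (nth v0 sO k, nth v0 sO (sg k)) \in sT.
Proof.
move=> H1 H2.
have Hsz : size sO = size sT by rewrite (perm_size H1) size_map.
case/(perm_iotaP v0): H1 => Is1 HI1 E1.
case/(perm_iotaP v0): H2 => Is2 HI2 E2.
rewrite size_map in HI1.
have u1 : uniq Is1 by rewrite (perm_uniq HI1) iota_uniq.
have u2 : uniq Is2 by rewrite (perm_uniq HI2) iota_uniq.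
have s1 : size Is1 = size sO by rewrite (perm_size HI1) size_iota.
have s2 : size Is2 = size sO by rewrite (perm_size HI2) size_iota Hsz.
have m1 : forall k, k < size sO -> nth 0 Is1 k < size sO.
  move=> k Hk; have : nth 0 Is1 k \in iota 0 (size sT) by rewrite -(perm_mem HI1) mem_nth // s1.
  by rewrite mem_iota Hsz.
have m2 : forall k, k < size sO -> nth 0 Is2 k < size sO.
  move=> k Hk; have : nth 0 Is2 k \in iota 0 (size sO) by rewrite -(perm_mem HI2) mem_nth // s2.
  by rewrite mem_iota.
pose g (k : 'I_(size sO)) : 'I_(size sO) :=
  Ordinal (m2 _ (m1 _ (ltn_ord k))).
exists g; split.
  move=> a b /(congr1 val) /= /eqP.
  rewrite nth_uniq ?s2 ?m1 // => /eqP.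
  move/eqP; rewrite nth_uniq ?s1 // => /eqP ab; exact: val_inj.
move=> k /=.
set j := nth 0 Is1 k.
have Hj : j < size sT by rewrite -Hsz m1.
have -> : nth v0 sO k = (nth (v0, v0) sT j).1.
  have H : forall kk, kk < size sO -> nth v0 sO kk = (nth (v0,v0) sT (nth 0 Is1 kk)).1.
    move=> kk Hk; rewrite [in LHS]E1 (nth_map 0) ?s1 // (nth_map (v0,v0)) //.
    by rewrite -Hsz m1.
  exact: H.
have -> : nth v0 sO (nth 0 Is2 j) = (nth (v0, v0) sT j).2.
  have : nth v0 (map snd sT) j = (nth (v0, v0) sT j).2 by rewrite (nth_map (v0,v0)).
  by rewrite E2 (nth_map 0) // s2 Hsz.
by rewrite -surjective_pairing mem_nth.
Qed.

Lemma pext (T : Type) (P Q : T -> Prop) : (forall x, P x <-> Q x) -> P = Q.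
Proof.
move=> H; apply: functional_extensionality => x; apply: propositional_extensionality; exact: H.
Qed.

Lemma sum_eventually (f : nat -> R) N :
  (forall k, (N < k)%nat -> f k = 0%R) -> infinite_sum f (sum_f_R0 f N).
Proof.
move=> H eps He; exists N => m Hm.
have -> : sum_f_R0 f m = sum_f_R0 f N.
  elim: m Hm => [|m IH] Hm; first by have -> : N = 0%nat by lia.
  case: (Nat.eq_dec (S m) N) => [<-//|ne].
  rewrite /= IH; last lia.
  rewrite H; [ring | apply/ltP; lia].
rewrite /R_dist Rminus_diag Rabs_R0; lra.
Qed.

Lemma sum_seq (A : eqType) (F : option A -> R) (s : seq (option A)) N :
  F None = 0%R -> (size s <= N)%nat ->
  sum_f_R0 (fun k => F (nth None s k)) N = \big[Rplus/0%R]_(o <- s) F o.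
Proof.
move=> F0; elim: s N => [|o s IH] N HN.
  rewrite big_nil; elim: N {HN} => [|N IH] /=; rewrite ?nth_nil F0 //; rewrite IH; ring.
case: N HN => [//|N] HN.
rewrite big_cons -(IH N HN).
rewrite (decomp_sum _ (S N)) /=; last lia.
by [].
Qed.

Section Meas.
Variables (n : nat) (V : finType) (mu : (treequence V n -> Prop) -> R).
Hypothesis Hmu : borel_prob_measure mu.
Notation T := (treequence V n).

Lemma open_borel (U : T -> Prop) : open_set U -> borel U.
Proof. by move=> HU M _ HM; apply: HM. Qed.

Lemma borel_compl (A : T -> Prop) : borel A -> borel (fun x => ~ A x).
Proof. move=> HA M HS HM; have [H1 H2 H3] := HS; apply: H2; exact: HA M HS HM. Qed.

Lemma borel_cunion (A : nat -> T -> Prop) : (forall k, borel (A k)) ->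
  borel (fun x => exists k, A k x).
Proof. move=> HA M HS HM. have [H1 H2 H3] := HS. apply: H3. move=> k. exact: HA k M HS HM. Qed.

Lemma borel_union (A B : T -> Prop) : borel A -> borel B -> borel (fun x => A x \/ B x).
Proof.
move=> HA HB.
have -> : (fun x => A x \/ B x) = (fun x => exists k, (if k is 0 then A else B) x).
  apply: pext => x; split; [case=> h; [by exists 0%nat | by exists 1%nat]|].
  by case=> [[|k]] h; [left|right].
by apply: borel_cunion => -[|k].
Qed.

Lemma open_empty : open_set (fun _ : T => False).
Proof. by []. Qed.

Lemma mu_empty : mu (fun _ => False) = 0%R.
Proof.
case: Hmu => _ _ Hadd.
have := Hadd (fun _ _ => False) (fun _ => open_borel open_empty) (fun _ _ _ _ h _ => h).
have -> : (fun x : T => exists _ : nat, False) = (fun _ => False) by apply: pext => x; split => // -[].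
set c := mu _ => Hs.
apply: NNPP => hc.
have hpos : (0 < Rabs c / 2)%R by have := Rabs_pos_lt c hc; lra.
have [N HN] := Hs _ hpos.
have h1 := HN N (le_n N). have h2 := HN (S N) (le_S _ _ (le_n N)).
rewrite /R_dist !sum_cte in h1 h2.
have e1 : (c * INR (S N) - c = INR N * c)%R by rewrite S_INR; ring.
have e2 : (c * INR (S (S N)) - c = (INR N + 1) * c)%R by rewrite !S_INR; ring.
rewrite e1 in h1; rewrite e2 in h2.
have := Rabs_triang ((INR N + 1) * c) (- (INR N * c)).
have -> : ((INR N + 1) * c + - (INR N * c) = c)%R by ring.
rewrite Rabs_Ropp.
lra.
Qed.


Lemma mu_fin (I : finType) (A : I -> T -> Prop) :
  (forall i, borel (A i)) ->
  (forall i j x, i <> j -> A i x -> A j x -> False) ->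
  mu (fun x => exists i, A i x) = \big[Rplus/0%R]_(i : I) mu (A i).
Proof.
move=> HB Hdis.
case: Hmu => _ _ Hadd.
pose s := map Some (enum I).
have us : uniq s by rewrite map_inj_uniq ?enum_uniq //; move=> a b [].
pose B k := fun x => match nth None s k with Some i => A i x | None => False end.
have Hrange : forall k i, nth None s k = Some i -> (k < size s)%nat.
  move=> k i; case: (ltnP k (size s)) => // h; by rewrite nth_default.
have HBb : forall k, borel (B k).
  move=> k; rewrite /B; case: (nth None s k) => [i|]; last exact: open_borel.
  exact: HB.
have HBd : forall i j x, i <> j -> B i x -> B j x -> False.
  move=> k1 k2 x ne; rewrite /B.
  case E1: (nth None s k1) => [i1|] //; case E2: (nth None s k2) => [i2|] // h1 h2.
  case: (eqVneq i1 i2) => [e|ne'].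
  - subst i2; apply: ne.
    have := Hrange _ _ E1; have := Hrange _ _ E2 => r2 r1.
    apply/eqP; rewrite -(nth_uniq None r1 r2 us) E1 E2 //.
  - apply: (Hdis i1 i2 x) => // e; by move: ne'; rewrite e eqxx.
have Hs := Hadd B HBb HBd.
have -> : (fun x => exists i, A i x) = (fun x => exists k, B k x).
  apply: pext => x; split.
  - case=> i h; exists (index (Some i) s); rewrite /B nth_index //.
    by rewrite /s (mem_map (@Some_inj _)) mem_enum.
  - case=> k; rewrite /B; case: (nth None s k) => [i h|//]; by exists i.
pose F (o : option I) := match o with Some i => mu (A i) | None => 0%R end.
have HF : forall k, mu (B k) = F (nth None s k).
  move=> k; rewrite /B /F; case: (nth None s k) => [i|//]; last exact: mu_empty.
  by [].
have Hs' : infinite_sum (fun k => mu (B k)) (sum_f_R0 (fun k => F (nth None s k)) (size s)).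
  have -> : (fun k => mu (B k)) = (fun k => F (nth None s k)) by apply: functional_extensionality.
  apply: sum_eventually => k hk; rewrite nth_default //; exact: ltnW.
rewrite (uniqueness_sum _ _ _ Hs Hs') sum_seq // /s big_map big_enum /=.
by [].
Qed.


Lemma mu_bin (A1 A2 : T -> Prop) : borel A1 -> borel A2 ->
  (forall x, A1 x -> A2 x -> False) ->
  mu (fun x => A1 x \/ A2 x) = (mu A1 + mu A2)%R.
Proof.
move=> H1 H2 Hd.
have := @mu_fin bool (fun b => if b then A1 else A2).
have -> : (fun x => exists i : bool, (if i then A1 else A2) x) = (fun x => A1 x \/ A2 x).
  apply: pext => x; split; first by case=> -[]; [left|right].
  by case=> h; [exists true | exists false].
rewrite big_bool /=; apply; first by case.
by case=> -[] x //= ne; [move=> h1 h2; exact: Hd h1 h2|move=> h2 h1; exact: Hd h1 h2].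
Qed.

Lemma mu_ge0 A : borel A -> (0 <= mu A)%R.
Proof. by case: Hmu => H _ _; apply: H. Qed.

Lemma mu_compl A : borel A -> (mu A + mu (fun x => ~ A x) = 1)%R.
Proof.
move=> HA; case: (Hmu) => _ H1 _.
rewrite -mu_bin //; last exact: borel_compl.
rewrite -H1; congr mu; apply: pext => x; split => // _; exact: classic.
Qed.

Lemma mu_null (X C : T -> Prop) : borel X -> borel C -> mu X = 1%R ->
  (forall x, C x -> X x -> False) -> mu C = 0%R.
Proof.
move=> HX HC mX Hd.
have h1 := mu_bin HC HX Hd.
have h2 := mu_compl (borel_union HC HX).
have h3 := mu_ge0 (borel_compl (borel_union HC HX)).
have h4 := mu_ge0 HC.
lra.
Qed.

End Meas.

Section Sub.
Variables (n : nat) (V : finType) (E : constraint_graph V n).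

Lemma X_borel : borel (in_subshift E).
Proof.
pose O k (x : treequence V n) := match @pickle_inv (FG n * letter n)%type k with
  | Some p => ~ E (x p.1) (x (fg_mul p.1 (fg_gen p.2))) p.2 | None => False end.
have -> : in_subshift E = (fun x => ~ exists k, O k x).
  apply: pext => x; split.
  - move=> HX [k]; rewrite /O; case: (pickle_inv k) => [[f l]|] //=; apply; exact: HX.
  - move=> H f l; apply: NNPP => ne; apply: H; exists (pickle (f, l)).
    by rewrite /O pickleK_inv.
apply: borel_compl; apply: borel_cunion => k; apply: open_borel.
rewrite /O; case: (pickle_inv k) => [[f l]|] /=; last by [].
move=> x hx; exists [:: f; fg_mul f (fg_gen l)] => y hy.
rewrite hy /=; last by left.
by rewrite hy /=; [|right; left].
Qed.

End Sub.

Section Quant.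
Variables (n : nat) (V : finType) (E : constraint_graph V n).
Variable mu : (treequence V n -> Prop) -> R.
Hypothesis Hmu : borel_prob_measure mu.
Hypothesis HX1 : mu (in_subshift E) = 1%R.
Hypothesis Hinv : shift_invariant mu.

Definition gi (i : 'I_n) : FG n := fg_gen (i, false).
Definition pi (v : V) := mu (fun x => x (fg_id n) = v).
Definition Pm i (v w : V) := mu (fun x => x (fg_id n) = v /\ x (gi i) = w).

Lemma mul_id_gen s : fg_mul (fg_id n) (fg_gen s) = fg_gen s.
Proof. by apply: val_inj. Qed.

Lemma mul_invinv_id i : fg_mul (fg_inv (fg_inv (gi i))) (fg_id n) = gi i.
Proof. by apply: val_inj. Qed.

Lemma mul_gi_inv i : fg_mul (gi i) (fg_gen (i, true)) = fg_id n.
Proof. apply: val_inj; rewrite /= eqxx //. Qed.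

Lemma pi_borel v : borel (fun x : treequence V n => x (fg_id n) = v).
Proof.
apply: open_borel => x hx; exists [:: fg_id n] => y hy; rewrite hy //; by left.
Qed.

Lemma Pm_borel i v w : borel (fun x : treequence V n => x (fg_id n) = v /\ x (gi i) = w).
Proof.
apply: open_borel => x hx; exists [:: fg_id n; gi i] => y hy.
by rewrite !hy //=; auto.
Qed.

Lemma gen_borel i w : borel (fun x : treequence V n => x (gi i) = w).
Proof.
apply: open_borel => x hx; exists [:: gi i] => y hy; rewrite hy //; by left.
Qed.

Lemma pi_ge0 v : (0 <= pi v)%R.
Proof. rewrite /pi; apply: (mu_ge0 Hmu); exact: pi_borel. Qed.

Lemma Pm_ge0 i v w : (0 <= Pm i v w)%R.
Proof. rewrite /Pm; apply: (mu_ge0 Hmu); exact: Pm_borel. Qed.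

Lemma pi_row i v : pi v = \big[Rplus/0%R]_(w : V) Pm i v w.
Proof.
rewrite /Pm -(mu_fin Hmu); last first.
- by move=> w1 w2 x ne [_ e1] [_ e2]; apply: ne; rewrite -e1 -e2.
- by move=> w; apply: Pm_borel.
rewrite /pi; congr mu; apply: pext => x; split; last by case=> w [].
by move=> h; exists (x (gi i)).
Qed.

Lemma pi_col i w : \big[Rplus/0%R]_(v : V) Pm i v w = pi w.
Proof.
rewrite /Pm -(mu_fin Hmu); last first.
- by move=> w1 w2 x ne [e1 _] [e2 _]; apply: ne; rewrite -e1 -e2.
- by move=> v; apply: Pm_borel.
have -> : (fun x : treequence V n => exists v, x (fg_id n) = v /\ x (gi i) = w) =
          (fun z => (fun x : treequence V n => x (fg_id n) = w) (shift (fg_inv (gi i)) z)).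
  apply: pext => x; rewrite /shift mul_invinv_id; split; first by case=> v [].
  by move=> h; exists (x (fg_id n)).
exact: (Hinv (gi i) (pi_borel w)).
Qed.

Lemma pi_total : \big[Rplus/0%R]_(v : V) pi v = 1%R.
Proof.
rewrite /pi -(mu_fin Hmu); last first.
- by move=> w1 w2 x ne e1 e2; apply: ne; rewrite -e1 -e2.
- by move=> v; apply: pi_borel.
case: Hmu => _ <- _; congr mu; apply: pext => x; split => // _; by exists (x (fg_id n)).
Qed.

Lemma Pm_edge i v w : (0 < Pm i v w)%R -> E v w (i, false) /\ E w v (i, true).
Proof.
move=> hp; split; apply: NNPP => ne.
- suff : Pm i v w = 0%R by lra.
  apply: (mu_null Hmu (X_borel E) (Pm_borel i v w) HX1).
  move=> x [h1 h2] HX; apply: ne; have := HX (fg_id n) (i, false).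
  by rewrite mul_id_gen h1 -/(gi i) h2.
- suff : Pm i v w = 0%R by lra.
  apply: (mu_null Hmu (X_borel E) (Pm_borel i v w) HX1).
  move=> x [h1 h2] HX; apply: ne; have := HX (gi i) (i, true).
  by rewrite mul_gi_inv h1 h2.
Qed.

End Quant.

Section Comb.
Variables (n : nat) (V : finType).
Definition J := (V + 'I_n * V * V)%type.

Lemma big_J (A : Type) (idx : A) (op : Monoid.com_law idx) (F : J -> A) :
  \big[op/idx]_(j : J) F j =
  op (\big[op/idx]_(u : V) F (inl u))
     (\big[op/idx]_(q : 'I_n * V) \big[op/idx]_(w : V) F (inr (q, w))).
Proof.
rewrite big_sumType pair_big /=; f_equal.
by apply: eq_bigr => -[q w] _.
Qed.

Lemma big_JZ (F : J -> Z) :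
  \big[Z.add/0%Z]_(j : J) F j =
  (\big[Z.add/0%Z]_(u : V) F (inl u) +
     \big[Z.add/0%Z]_(q : 'I_n * V) \big[Z.add/0%Z]_(w : V) F (inr (q, w)))%Z.
Proof. exact: big_J. Qed.

Lemma big_JR (F : J -> R) :
  \big[Rplus/0%R]_(j : J) F j =
  (\big[Rplus/0%R]_(u : V) F (inl u) +
     \big[Rplus/0%R]_(q : 'I_n * V) \big[Rplus/0%R]_(w : V) F (inr (q, w)))%R.
Proof. exact: big_J. Qed.

Lemma big_pick (A : Type) (idx : A) (op : Monoid.com_law idx) (I : finType) (F : I -> A) (i0 : I) :
  (forall i, i != i0 -> F i = idx) -> \big[op/idx]_(i : I) F i = F i0.
Proof.
move=> H; rewrite (bigD1 i0) //= big1 ?Monoid.mulm1 // => i; exact: H.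
Qed.

Definition row (i : 'I_n) (v : V) : J -> Z := fun j =>
  match j with inl u => if u == v then (-1)%Z else 0%Z
  | inr p => if (p.1.1 == i) && (p.1.2 == v) then 1%Z else 0%Z end.
Definition col (i : 'I_n) (w : V) : J -> Z := fun j =>
  match j with inl u => if u == w then (-1)%Z else 0%Z
  | inr p => if (p.1.1 == i) && (p.2 == w) then 1%Z else 0%Z end.
Definition uvec (j0 : J) : J -> Z := fun j => if j == j0 then 1%Z else 0%Z.

Lemma dotR_unit j0 y : dotR (uvec j0) y = y j0.
Proof.
rewrite /dotR (@big_pick _ _ _ _ _ j0) /uvec ?eqxx /=; first ring.
by move=> j /negbTE ->; rewrite Rmult_0_l.
Qed.

Lemma dotZ_unit j0 z : dotZ (uvec j0) z = z j0.
Proof.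
rewrite /dotZ (@big_pick _ _ _ _ _ j0) /uvec ?eqxx; first lia.
by move=> j /negbTE ->.
Qed.

Lemma dotR_row i v y : dotR (row i v) y =
  (- y (inl v) + \big[Rplus/0%R]_(w : V) y (inr (i, v, w)))%R.
Proof.
rewrite /dotR big_JR (@big_pick _ _ _ _ _ v); last by move=> u /negbTE /= ->; rewrite Rmult_0_l.
rewrite (@big_pick _ _ _ _ _ (i, v)); last first.
  move=> q hq; apply: big1 => w _ /=.
  case: q hq => i' v' /= hq; case: ifP; last by rewrite Rmult_0_l.
  by case/andP => /eqP e1 /eqP e2; move: hq; rewrite e1 e2 eqxx.
rewrite /= !eqxx /=.
under eq_bigr => w _ do rewrite Rmult_1_l.
ring.
Qed.

Lemma Zmatch_id (x : Z) : match x with 0%Z => 0%Z | Z.pos y => Z.pos y | Z.neg y => Z.neg y end = x.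
Proof. by case: x. Qed.
Lemma Zmatch_opp (x : Z) : match x with 0%Z => 0%Z | Z.pos y => Z.neg y | Z.neg y => Z.pos y end = (- x)%Z.
Proof. by case: x. Qed.

Lemma dotZ_row i v z : dotZ (row i v) z =
  (- z (inl v) + \big[Z.add/0%Z]_(w : V) z (inr (i, v, w)))%Z.
Proof.
rewrite /dotZ big_JZ (@big_pick _ _ _ _ _ v); last by move=> u /negbTE /= ->.
rewrite (@big_pick _ _ _ _ _ (i, v)); last first.
  move=> q hq; apply: big1 => w _ /=.
  case: q hq => i' v' /= hq; case: ifP => //.
  by case/andP => /eqP e1 /eqP e2; move: hq; rewrite e1 e2 eqxx.
congr (_ + _)%Z.
- by rewrite /row eqxx; case: (z (inl v)).
- by apply: eq_bigr => w _; rewrite /row /= !eqxx; case: (z _).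
Qed.


Lemma big_pair (A : Type) (idx : A) (op : Monoid.com_law idx) (I1 I2 : finType) (G : I1 * I2 -> A) :
  \big[op/idx]_(q : I1 * I2) G q = \big[op/idx]_(a : I1) \big[op/idx]_(b : I2) G (a, b).
Proof. by rewrite pair_big; apply: eq_big => -[]. Qed.

Lemma big_pairR (I1 I2 : finType) (G : I1 * I2 -> R) :
  \big[Rplus/0%R]_(q : I1 * I2) G q = \big[Rplus/0%R]_(a : I1) \big[Rplus/0%R]_(b : I2) G (a, b).
Proof. exact: big_pair. Qed.
Lemma big_pairZ (I1 I2 : finType) (G : I1 * I2 -> Z) :
  \big[Z.add/0%Z]_(q : I1 * I2) G q = \big[Z.add/0%Z]_(a : I1) \big[Z.add/0%Z]_(b : I2) G (a, b).
Proof. exact: big_pair. Qed.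

Lemma dotR_col i w y : dotR (col i w) y =
  (- y (inl w) + \big[Rplus/0%R]_(v : V) y (inr (i, v, w)))%R.
Proof.
rewrite /dotR big_JR (@big_pick _ _ _ _ _ w); last by move=> u /negbTE /= ->; rewrite Rmult_0_l.
have -> : \big[Rplus/0%R]_(q : 'I_n * V) \big[Rplus/0%R]_(w' : V)
            (IZR (col i w (inr (q, w'))) * y (inr (q, w')))%R
          = \big[Rplus/0%R]_(q : 'I_n * V) (if q.1 == i then y (inr (q, w)) else 0%R).
  apply: eq_bigr => q _; rewrite (@big_pick _ _ _ _ _ w); last first.
    by move=> w' /negbTE hw; rewrite /col /= hw andbF Rmult_0_l.
  rewrite /col /= eqxx andbT; case: ifP => _; ring.
rewrite big_pairR (@big_pick _ _ _ _ _ i); last first.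
  by move=> i' /negbTE hi; apply: big1 => v _ /=; rewrite hi.
congr (_ + _)%R; first by rewrite /col eqxx /=; ring.
by apply: eq_bigr => v _; rewrite /= eqxx.
Qed.

Lemma dotZ_col i w z : dotZ (col i w) z =
  (- z (inl w) + \big[Z.add/0%Z]_(v : V) z (inr (i, v, w)))%Z.
Proof.
rewrite /dotZ big_JZ (@big_pick _ _ _ _ _ w); last by move=> u /negbTE /= ->.
have -> : \big[Z.add/0%Z]_(q : 'I_n * V) \big[Z.add/0%Z]_(w' : V)
            (col i w (inr (q, w')) * z (inr (q, w')))%Z
          = \big[Z.add/0%Z]_(q : 'I_n * V) (if q.1 == i then z (inr (q, w)) else 0%Z).
  apply: eq_bigr => q _; rewrite (@big_pick _ _ _ _ _ w); last first.
    by move=> w' /negbTE hw; rewrite /col /= hw andbF.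
  rewrite /col /= eqxx andbT; case: ifP => _ //; by case: (z _).
rewrite big_pairZ (@big_pick _ _ _ _ _ i); last first.
  by move=> i' /negbTE hi; apply: big1 => v _ /=; rewrite hi.
congr (_ + _)%Z; first by rewrite /col eqxx; case: (z _).
by apply: eq_bigr => v _; rewrite /= eqxx.
Qed.


Lemma In_mem (T : eqType) (x : T) (s : seq T) : x \in s -> List.In x s.
Proof.
elim: s => //= a l IH; rewrite inE => /orP [/eqP ->|h]; [by left|right; exact: IH].
Qed.

Lemma In_filter (T : Type) (p : pred T) (x : T) (s : seq T) : List.In x s -> p x -> List.In x (filter p s).
Proof.
elim: s => //= a l IH [<-|h] px; first by rewrite px; left.
by case: (p a) => /=; [right|]; apply: IH.
Qed.

Lemma In_filter_inv (T : Type) (p : pred T) (x : T) (s : seq T) : List.In x (filter p s) -> p x.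
Proof.
elim: s => //= a l IH; case pa: (p a) => /=; last exact: IH.
by case=> [<-//|h]; exact: IH.
Qed.

Lemma In_enumT (T : finType) (x : T) : List.In x (enum (predT : pred T)).
Proof. by apply: In_mem; rewrite mem_enum. Qed.

Lemma sum_enumN (T : finType) (F : T -> nat) : \sum_(v <- enum T) F v = \sum_(v : T) F v.
Proof. by rewrite big_enum. Qed.


Lemma main_comb (E : constraint_graph V n) (pi : V -> R) (Pm : 'I_n -> V -> V -> R) (v0 : V) :
  (forall v, 0 <= pi v)%R -> (forall i v w, 0 <= Pm i v w)%R ->
  (forall i v, pi v = \big[Rplus/0%R]_(w : V) Pm i v w) ->
  (forall i w, \big[Rplus/0%R]_(v : V) Pm i v w = pi w) ->
  (forall i v w, 0 < Pm i v w -> E v w (i, false) /\ E w v (i, true))%R ->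
  (0 < pi v0)%R ->
  exists x : treequence V n, [/\ in_subshift E x, periodic x & x (fg_id n) = v0].
Proof.
move=> pi0 Pm0 Hrow Hcol Hedge Hv0.
pose y (j : J) : R := match j with inl v => pi v | inr p => Pm p.1.1 p.1.2 p.2 end.
have y0 : forall j, (0 <= y j)%R by case=> [v|[[i v] w]] /=.
pose posb (j : J) : bool := if Rlt_dec 0 (y j) then true else false.
have posbP : forall j, posb j -> (0 < y j)%R by move=> j; rewrite /posb; case: Rlt_dec.
have posbN : forall j, ~~ posb j -> y j = 0%R.
  move=> j; rewrite /posb; case: Rlt_dec => // h _; have := y0 j; lra.
pose eqs := List.map (fun p : 'I_n * V => row p.1 p.2) (enum (predT : pred ('I_n * V))) ++
            (List.map (fun p : 'I_n * V => col p.1 p.2) (enum (predT : pred ('I_n * V))) ++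
             List.map uvec (filter (fun j => ~~ posb j) (enum (predT : pred J)))).
pose ineqs := List.map uvec (filter posb (enum (predT : pred J))).
have [z [Hze Hzi]] : exists z, (forall e, List.In e eqs -> dotZ e z = 0%Z) /\
            (forall d, List.In d ineqs -> (dotZ d z > 0)%Z).
  apply: (elimZ (y := y)).
  - move=> e He; case: (List.in_app_or _ _ _ He) => [He1|He2].
      have [[i v] [<- _]] := proj1 (List.in_map_iff _ _ _) He1.
      rewrite dotR_row /y /= -Hrow; ring.
    case: (List.in_app_or _ _ _ He2) => [He1|He3].
      have [[i w] [<- _]] := proj1 (List.in_map_iff _ _ _) He1.
      rewrite dotR_col /y /= Hcol; ring.
    have [j [<- Hj]] := proj1 (List.in_map_iff _ _ _) He3.
    rewrite dotR_unit; apply: posbN; exact: In_filter_inv Hj.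
  - move=> d Hd; have [j [<- Hj]] := proj1 (List.in_map_iff _ _ _) Hd.
    rewrite dotR_unit; apply: posbP; exact: In_filter_inv Hj.
have zpos : forall j, posb j -> (0 < z j)%Z.
  move=> j hj; have := Hzi (uvec j); rewrite dotZ_unit; move=> h; apply: Z.gt_lt; apply: h.
  apply: List.in_map; apply: In_filter => //; exact: In_enumT.
have zzero : forall j, ~~ posb j -> z j = 0%Z.
  move=> j hj; have := Hze (uvec j); rewrite dotZ_unit; apply.
  apply: List.in_or_app; right; apply: List.in_or_app; right.
  apply: List.in_map; apply: In_filter => //; exact: In_enumT.
have z0 : forall j, (0 <= z j)%Z.
  move=> j; case hj: (posb j); [have := zpos j hj | have := zzero j (negbT hj)]; lia.
have zy : forall j, (0 < z j)%Z -> (0 < y j)%R.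
  move=> j hz; case hj: (posb j); first exact: posbP.
  by move: hz; rewrite (zzero j (negbT hj)).
have zrow : forall i v, \big[Z.add/0%Z]_(w : V) z (inr (i, v, w)) = z (inl v).
  move=> i v; have := Hze (row i v); rewrite dotZ_row => h.
  suff : (- z (inl v) + \big[Z.add/0%Z]_(w : V) z (inr (i, v, w)))%Z = 0%Z by lia.
  apply: h; apply: List.in_or_app; left.
  exact: (List.in_map (fun p : 'I_n * V => row p.1 p.2) _ (i, v) (In_enumT _)).
have zcol : forall i w, \big[Z.add/0%Z]_(v : V) z (inr (i, v, w)) = z (inl w).
  move=> i w; have := Hze (col i w); rewrite dotZ_col => h.
  suff : (- z (inl w) + \big[Z.add/0%Z]_(v : V) z (inr (i, v, w)))%Z = 0%Z by lia.
  apply: h; apply: List.in_or_app; right; apply: List.in_or_app; left.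
  exact: (List.in_map (fun p : 'I_n * V => col p.1 p.2) _ (i, w) (In_enumT _)).
have zv0 : (0 < z (inl v0))%Z.
  apply: zpos; rewrite /posb; case: Rlt_dec => //.
pose N (v : V) := Z.to_nat (z (inl v)).
pose M (i : 'I_n) (v w : V) := Z.to_nat (z (inr (i, v, w))).
have ofnat_sum : forall (F : V -> nat), Z.of_nat (\sum_(w : V) F w) = \big[Z.add/0%Z]_(w : V) Z.of_nat (F w).
  move=> F; apply: (big_morph Z.of_nat) => // a b; exact: Nat2Z.inj_add.
have Nrow : forall i v, \sum_(w : V) M i v w = N v.
  move=> i v; apply: Nat2Z.inj; rewrite ofnat_sum /N /M Z2Nat.id // -(zrow i).
  by apply: eq_bigr => w _; rewrite Z2Nat.id.
have Ncol : forall i w, \sum_(v : V) M i v w = N w.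
  move=> i w; apply: Nat2Z.inj; rewrite ofnat_sum /N /M Z2Nat.id // -(zcol i).
  by apply: eq_bigr => v _; rewrite Z2Nat.id.
have Mpos : forall i v w, leq 1 (M i v w) -> (0 < Pm i v w)%R.
  move=> i v w /ltP h; have := zy (inr (i, v, w)); apply; rewrite /M in h; lia.
pose sO := flatten [seq nseq (N v) v | v <- enum (predT : pred V)].
pose sT (i : 'I_n) := flatten [seq nseq (M i p.1 p.2) p | p <- enum (predT : pred (V * V))].
have cntO : forall u, count_mem u sO = N u.
  move=> u; rewrite count_flatten -map_comp sumnE big_map sum_enumN.
  rewrite (@big_pick _ _ _ _ _ u) /= ?count_nseq; first by rewrite /= eqxx mul1n.
  by move=> v /negbTE; rewrite count_nseq /= eq_sym => ->.
have cnt1 : forall i u, count_mem u (map fst (sT i)) = N u.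
  move=> i u; rewrite -(Nrow i u) count_map count_flatten -map_comp sumnE big_map sum_enumN.
  rewrite big_pair (@big_pick _ _ _ _ _ u); last first.
    by move=> a /negbTE ha; apply: big1 => b _; rewrite /= count_nseq /= ha.
  by apply: eq_bigr => b _; rewrite /= count_nseq /= eqxx mul1n.
have cnt2 : forall i u, count_mem u (map snd (sT i)) = N u.
  move=> i u; rewrite -(Ncol i u) count_map count_flatten -map_comp sumnE big_map sum_enumN.
  rewrite big_pair; apply: eq_bigr => a _.
  rewrite (@big_pick _ _ _ _ _ u); last first.
    by move=> b /negbTE hb; rewrite /= count_nseq /= hb.
  by rewrite /= count_nseq /= eqxx mul1n.
have Hsg : forall i, exists sg : 'I_(size sO) -> 'I_(size sO),
    injective sg /\ forall k : 'I_(size sO), (nth v0 sO k, nth v0 sO (sg k)) \in sT i.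
  move=> i; apply: build_sigma.
  - rewrite /perm_eq; apply/allP => u _; apply/eqP; by rewrite cntO cnt1.
  - rewrite /perm_eq; apply/allP => u _; apply/eqP; by rewrite cntO cnt2.
pose sgf i := proj1_sig (constructive_indefinite_description _ (Hsg i)).
have sgf_inj : forall i, injective (sgf i).
  by move=> i; have [h _] := proj2_sig (constructive_indefinite_description _ (Hsg i)).
have sgf_mem : forall i (k : 'I_(size sO)), (nth v0 sO k, nth v0 sO (sgf i k)) \in sT i.
  by move=> i; have [_ h] := proj2_sig (constructive_indefinite_description _ (Hsg i)).
have memT : forall i a b, (a, b) \in sT i -> (0 < Pm i a b)%R.
  move=> i a b /flattenP [s' /mapP [[a' b'] _ ->]]; rewrite mem_nseq => /andP [h /eqP [-> ->]].
  exact: Mpos.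
have v0in : v0 \in sO.
  rewrite -has_pred1 has_count cntO /N; apply/ltP; lia.
have w0lt : index v0 sO < size sO by rewrite index_mem.
pose w0 : 'I_(size sO) := Ordinal w0lt.
pose x (f : FG n) := nth v0 sO (aw sgf_inj w0 f).
exists x; split.
- move=> f [i b]; rewrite /x aw_mul aw_gen; set w := aw sgf_inj w0 f.
  case: b; rewrite /act_letter /=.
  + set w' := invF (sgf_inj i) w.
    have e : sgf i w' = w by rewrite /w' f_invF.
    have := memT _ _ _ (sgf_mem i w'); rewrite e => /Hedge [_ h]; exact: h.
  + by have := memT _ _ _ (sgf_mem i w) => /Hedge [h _].
- pose rep (w : 'I_(size sO)) := epsilon (inhabits (fg_id n)) (fun r => aw sgf_inj w0 (fg_inv r) = w).
  exists (List.map rep (enum (predT : pred 'I_(size sO)))) => f.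
  set w := aw sgf_inj w0 (fg_inv f).
  have hr : aw sgf_inj w0 (fg_inv (rep w)) = w.
    by apply: (epsilon_spec (inhabits (fg_id n)) (fun r => aw sgf_inj w0 (fg_inv r) = w)); exists f.
  exists (rep w); first exact: List.in_map (In_enumT _).
  move=> h; rewrite /shift /x.
  set g := fg_mul (fg_inv (rep w)) f.
  have hg : aw sgf_inj w0 g = w0 by rewrite /g aw_mul hr /w aw_Kinv.
  have hg' : aw sgf_inj w0 (fg_inv g) = w0.
    by rewrite -{1}hg aw_invK.
  by rewrite aw_mul hg'.
- by rewrite /x aw_id /w0 /= nth_index.
Qed.
End Comb.

Theorem theorem5 (n : nat) (V : finType) (E : constraint_graph V n)
  (mu : (treequence V n -> Prop) -> R) :
  borel_prob_measure mu ->
  mu (in_subshift E) = 1%R ->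
  shift_invariant mu ->
  (exists x : treequence V n, in_subshift E x /\ periodic x) /\
  (forall v : V,
     (mu (fun x => in_subshift E x /\ x (fg_id n) = v) > 0)%R ->
     exists x : treequence V n, [/\ in_subshift E x, periodic x & x (fg_id n) = v]).
Proof.
move=> Hmu HX1 Hinv.
have key : forall v, (0 < pi mu v)%R ->
    exists x : treequence V n, [/\ in_subshift E x, periodic x & x (fg_id n) = v].
  move=> v hv; apply: (main_comb (pi := pi mu) (Pm := Pm mu)) => //.
  - move=> u; exact: pi_ge0.
  - move=> i a b; exact: Pm_ge0.
  - move=> i u; exact: pi_row.
  - move=> i u; exact: pi_col.
  - move=> i a b; exact: Pm_edge.
split.
- have [v hv] : exists v, (0 < pi mu v)%R.
    apply: NNPP => hn.
    have : (\big[Rplus/0%R]_(v : V) pi mu v <= \big[Rplus/0%R]_(v : V) 0%R)%R.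
      apply: sumR_le => v; apply: Rnot_lt_le => h; apply: hn; by exists v.
    rewrite (pi_total Hmu) big1 //; lra.
  by have [x [h1 h2 _]] := key v hv; exists x.
- move=> v hv; apply: key.
  have HC : borel (fun x : treequence V n => x (fg_id n) = v) by exact: pi_borel.
  have HX : borel (in_subshift E) by exact: X_borel.
  have HA : borel (fun x => in_subshift E x /\ x (fg_id n) = v).
    have -> : (fun x => in_subshift E x /\ x (fg_id n) = v) =
              (fun x => ~ ((~ in_subshift E x) \/ ~ (x (fg_id n) = v))).
      apply: pext => x; split; first by case=> h1 h2 [].
      by move=> h; split; apply: NNPP => h'; apply: h; [left|right].
    by apply: borel_compl; apply: borel_union; apply: borel_compl.
  have HB : borel (fun x => ~ in_subshift E x /\ x (fg_id n) = v).
    have -> : (fun x => ~ in_subshift E x /\ x (fg_id n) = v) =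
              (fun x => ~ ((~ ~ in_subshift E x) \/ ~ (x (fg_id n) = v))).
      apply: pext => x; split; first by case=> h1 h2 [].
      by move=> h; split; apply: NNPP => h'; apply: h; [left|right].
    by apply: borel_compl; apply: borel_union; apply: borel_compl => //; apply: borel_compl.
  have e : pi mu v = (mu (fun x => in_subshift E x /\ x (fg_id n) = v) +
                      mu (fun x => ~ in_subshift E x /\ x (fg_id n) = v))%R.
    rewrite -(mu_bin Hmu HA HB); last by move=> x [h1 _] [h2 _].
    rewrite /pi; congr mu; apply: pext => x; split; last by case=> -[].
    by move=> h; case: (classic (in_subshift E x)) => hx; [left|right].
  have := mu_ge0 Hmu HB; lra.
Qed.
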